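(* Let $M\ge K\ge 2$ be integers and $P_u>0$. Define $$R_{\mathrm{ZF,UL}}=K\log_2\!\left(1+P_u(M-K+1)\right),\qquad R_{\mathrm{MRC,UL}}=K\log_2\!\left(1+\frac{P_uM}{P_u(K-1)+1}\right).$$ Then $R_{\mathrm{ZF,UL}}\ge R_{\mathrm{MRC,UL}}$ if and only if $P_u\ge P_{\mathrm{th,UL}}:=\dfrac{1}{M-K+1}$.
   Context: In the paper, $R_{\mathrm{ZF,UL}}$ and $R_{\mathrm{MRC,UL}}$ are the closed-form low-SNR expressions for the ergodic uplink sum rate of a system with $M$ base-station antennas and $K$ single-antenna users each transmitting with power $P_u$ (i.i.d. Rayleigh channel, unit noise variance), using a zero-forcing receive filter and maximum ratio combining, respectively; the lemma states that ZF gives the better sum rate exactly when the per-user power exceeds $P_{\mathrm{th,UL}}$. *)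

(* Defs.v *)
From Stdlib Require Import Reals.
Open Scope R_scope.

Definition log2 (x : R) : R := ln x / ln 2.

Definition R_ZF_UL (M K : nat) (Pu : R) : R :=
  INR K * log2 (1 + Pu * (INR M - INR K + 1)).

Definition R_MRC_UL (M K : nat) (Pu : R) : R :=
  INR K * log2 (1 + Pu * INR M / (Pu * (INR K - 1) + 1)).

Definition P_th_UL (M K : nat) : R := 1 / (INR M - INR K + 1).

(* Main.v *)
Require Import Defs.
From Stdlib Require Import Reals Lra Psatz.
Open Scope R_scope.

Lemma key (a b : R) : 0 < a -> 0 < b -> (ln a >= ln b <-> a >= b).
Proof.
  intros Ha Hb; split; intro H.
  - destruct (Rge_dec a b) as [|Hn]; auto.
    assert (ln a < ln b) by (apply ln_increasing; lra). lra.
  - destruct (Req_dec a b) as [->|Hn]; [lra|].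
    assert (ln b < ln a) by (apply ln_increasing; lra). lra.
Qed.

Theorem lemma7 (M K : nat) (Pu : R) :
  (2 <= K)%nat -> (K <= M)%nat -> 0 < Pu ->
  (R_ZF_UL M K Pu >= R_MRC_UL M K Pu <-> Pu >= P_th_UL M K).
Proof.
  intros HK HKM HP.
  apply le_INR in HK. apply le_INR in HKM. simpl in HK.
  unfold R_ZF_UL, R_MRC_UL, P_th_UL, log2.
  set (d := INR M - INR K + 1). set (k := INR K - 1).
  assert (Hd : 1 <= d) by (unfold d; lra).
  assert (Hk : 1 <= k) by (unfold k; lra).
  assert (Hl2 : 0 < ln 2) by (rewrite <- ln_1; apply ln_increasing; lra).
  assert (Hden : 0 < Pu * k + 1) by nra.
  assert (HM : INR M = d + k) by (unfold d, k; lra).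
  rewrite HM.
  assert (Ha : 0 < 1 + Pu * d) by nra.
  assert (Hb : 0 < 1 + Pu * (d + k) / (Pu * k + 1)).
  { apply Rplus_lt_le_0_compat; [lra|]. apply Rlt_le, Rdiv_lt_0_compat; nra. }
  assert (Hdiff : (1 + Pu * d) - (1 + Pu * (d + k) / (Pu * k + 1)) = Pu * k * (Pu * d - 1) / (Pu * k + 1)).
  { field. lra. }
  assert (E : forall x y, INR K * (x / ln 2) >= INR K * (y / ln 2) <-> x >= y).
  { intros x y. unfold Rdiv. split; intro H.
    - apply Rle_ge. apply Rmult_le_reg_r with (r := INR K * / ln 2).
      + apply Rmult_lt_0_compat; [lra| apply Rinv_0_lt_compat; lra].
      + nra.
    - apply Rle_ge. assert (0 < / ln 2) by (apply Rinv_0_lt_compat; lra).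
      assert (0 <= (x - y) * / ln 2) by nra. nra. }
  rewrite E, key by assumption.
  assert (Hq : 1 / d <= Pu <-> 1 <= Pu * d).
  { split; intro H.
    - apply Rmult_le_compat_r with (r := d) in H; [|lra].
      replace (1 / d * d) with 1 in H by (field; lra). lra.
    - apply Rmult_le_reg_r with (r := d); [lra|].
      replace (1 / d * d) with 1 by (field; lra). lra. }
  split; intro H.
  - apply Rle_ge, Hq.
    assert (0 <= Pu * k * (Pu * d - 1) / (Pu * k + 1)) by lra.
    assert (0 <= Pu * k * (Pu * d - 1)).
    { replace (Pu * k * (Pu * d - 1)) with (Pu * k * (Pu * d - 1) / (Pu * k + 1) * (Pu * k + 1)) by (field; lra). nra. }
    assert (0 < Pu * k) by nra. nra.
  - apply Rge_le in H. apply Hq in H.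
    assert (0 <= Pu * k * (Pu * d - 1) / (Pu * k + 1)).
    { unfold Rdiv. apply Rmult_le_pos; [apply Rmult_le_pos; nra|]. apply Rlt_le, Rinv_0_lt_compat; lra. }
    lra.
Qed.
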